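(* Let $T$ be a compactum and $\mathbf a,\mathbf b,\mathbf c,\mathbf d$ entourages of $T$. If $\mathbf a-\mathbf b-\mathbf c\ (4)$, $\mathbf a\#\mathbf d$ and $\mathbf c\#\mathbf d$, then $\mathbf b\#\mathbf d$.
   Context: Let $T$ be a compact Hausdorff space, $S^2T$ the space of unordered pairs of points of $T$ (diagonal allowed), $\Delta^2T$ the diagonal. An entourage is a neighborhood of $\Delta^2T$ in $S^2T$. For an entourage $\mathbf e$, $\Delta_{\mathbf e}$ is the graph distance on $T$ for the graph with vertex set $T$ and edges the pairs in $\mathbf e$; for sets, $\Delta_{\mathbf e}(a,b)=\inf$ over $x\in a,y\in b$. A set is $\mathbf e$-small if its $\Delta_{\mathbf e}$-diameter is $\le1$. Entourages $\mathbf a,\mathbf b$ are unlinked ($\mathbf a\bowtie\mathbf b$) if $T=a\cup b$ for an $\mathbf a$-small $a$ and a $\mathbf b$-small $b$; otherwise linked ($\mathbf a\#\mathbf b$). Standing conventions: every entourage considered is linked with itself and $T$ has $\Delta_{\mathbf a}$-diameter $>4$. For $\mathbf a\bowtie\mathbf b$, $\mathrm{sh}_{\mathbf a}\mathbf b=\bigcap\{a: a\ \mathbf a\text{-small},\ T\setminus a\ \mathbf b\text{-small}\}$. $\mathbf a-\mathbf b-\mathbf c\ (k)$ means $\mathbf a\bowtie\mathbf b\bowtie\mathbf c$ and $\Delta_{\mathbf b}(\mathrm{sh}_{\mathbf b}\mathbf a,\mathrm{sh}_{\mathbf b}\mathbf c)>k$. *)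

(* Defs.v *)
From Stdlib Require Import List.

Set Implicit Arguments.

Record topology (T : Type) := Topology {
  is_open : (T -> Prop) -> Prop;
  open_full : is_open (fun _ => True);
  open_union : forall F : (T -> Prop) -> Prop,
      (forall U, F U -> is_open U) -> is_open (fun x => exists U, F U /\ U x);
  open_inter : forall U V, is_open U -> is_open V -> is_open (fun x => U x /\ V x)
}.

Definition compact (T : Type) (tau : topology T) : Prop :=
  forall F : (T -> Prop) -> Prop,
    (forall U, F U -> is_open tau U) ->
    (forall x, exists U, F U /\ U x) ->
    exists l : list (T -> Prop),
      (forall U, In U l -> F U) /\ (forall x, exists U, In U l /\ U x).

Definition hausdorff (T : Type) (tau : topology T) : Prop :=
  forall x y : T, x <> y ->
    exists U V, is_open tau U /\ is_open tau V /\ U x /\ V y /\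
                (forall z, U z -> V z -> False).

Definition prod_open (T : Type) (tau : topology T) (W : T -> T -> Prop) : Prop :=
  forall x y, W x y -> exists U V, is_open tau U /\ is_open tau V /\ U x /\ V y /\
    (forall u v, U u -> V v -> W u v).

(* A subset of S^2 T (unordered pairs, diagonal allowed) is represented by the
   symmetric relation of pairs (x,y) with {x,y} in it.  S^2 T carries the quotient
   topology of T x T, so its open sets are exactly the symmetric open relations.
   An entourage is a neighbourhood of the diagonal Delta^2 T in S^2 T. *)
Definition symmetric (T : Type) (e : T -> T -> Prop) : Prop :=
  forall x y, e x y -> e y x.

Definition entourage (T : Type) (tau : topology T) (e : T -> T -> Prop) : Prop :=
  symmetric e /\
  exists W : T -> T -> Prop,
    symmetric W /\ prod_open tau W /\ (forall x, W x x) /\ (forall x y, W x y -> e x y).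

(* within e n x y  <->  Delta_e(x,y) <= n  (there is an e-path of length <= n). *)
Inductive within (T : Type) (e : T -> T -> Prop) : nat -> T -> T -> Prop :=
| within_refl : forall n x, within e n x x
| within_step : forall n x y z, e x y -> within e n y z -> within e (S n) x z.

(* Delta_e(A,B) > k, with Delta_e(A,B) = inf over x in A, y in B (inf of empty = oo). *)
Definition set_dist_gt (T : Type) (e : T -> T -> Prop) (A B : T -> Prop) (k : nat) : Prop :=
  forall x y, A x -> B y -> ~ within e k x y.

Definition small (T : Type) (e : T -> T -> Prop) (A : T -> Prop) : Prop :=
  forall x y, A x -> A y -> within e 1 x y.

Definition diam_gt (T : Type) (e : T -> T -> Prop) (n : nat) : Prop :=
  exists x y, ~ within e n x y.

Definition unlinked (T : Type) (a b : T -> T -> Prop) : Prop :=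
  exists A B : T -> Prop, (forall x, A x \/ B x) /\ small a A /\ small b B.

Definition linked (T : Type) (a b : T -> T -> Prop) : Prop := ~ unlinked a b.

Definition sh (T : Type) (a b : T -> T -> Prop) : T -> Prop :=
  fun x => forall A : T -> Prop, small a A -> small b (fun y => ~ A y) -> A x.

Definition chain3 (T : Type) (a b c : T -> T -> Prop) (k : nat) : Prop :=
  unlinked a b /\ unlinked b c /\ set_dist_gt b (sh b a) (sh b c) k.

Definition standing (T : Type) (tau : topology T) (e : T -> T -> Prop) : Prop :=
  entourage tau e /\ linked e e /\ diam_gt e 4.

(* Main.v *)
Require Import Defs.
From Stdlib Require Import Classical Lia.

Lemma within_mono T (e : T -> T -> Prop) k x y :
  within e k x y -> forall j, k <= j -> within e j x y.
Proof.
  induction 1; intros j Hj. apply within_refl.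
  destruct j. lia. eapply within_step; eauto. apply IHwithin. lia.
Qed.

Lemma within_trans T (e : T -> T -> Prop) m x y :
  within e m x y -> forall n z, within e n y z -> within e (m + n) x z.
Proof.
  induction 1; intros k w Hw.
  - simpl. eapply within_mono; [exact Hw|lia].
  - simpl. eapply within_step; eauto.
Qed.

Lemma sh_nonempty T (a b : T -> T -> Prop) :
  linked b b -> diam_gt a 4 -> exists x, sh b a x.
Proof.
  intros Hbb [p [q Hpq]].
  destruct (classic (sh b a p)) as [H|H]. eauto.
  destruct (classic (sh b a q)) as [H'|H']. eauto.
  exfalso.
  unfold sh in H, H'.
  apply not_all_ex_not in H as [X1 H]. apply not_all_ex_not in H' as [X2 H'].
  destruct (classic (X1 p)) as [h|h1]. apply H; intros; exact h.
  destruct (classic (small b X1)) as [s1|s1]. 2:{ apply H; intros; contradiction. }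
  destruct (classic (small a (fun y => ~ X1 y))) as [c1|c1]. 2:{ apply H; intros; contradiction. }
  destruct (classic (X2 q)) as [h|h2]. apply H'; intros; exact h.
  destruct (classic (small b X2)) as [s2|s2]. 2:{ apply H'; intros; contradiction. }
  destruct (classic (small a (fun y => ~ X2 y))) as [c2|c2]. 2:{ apply H'; intros; contradiction. }
  destruct (classic (exists m, ~ X1 m /\ ~ X2 m)) as [[m [m1 m2]]|Hn].
  - apply Hpq. eapply within_mono with (k := 1 + 1); [|lia].
    apply within_trans with (y := m). apply c1; auto. apply c2; auto.
  - apply Hbb. exists X1, X2. split; auto.
    intro x. destruct (classic (X1 x)); auto. destruct (classic (X2 x)); auto.
    exfalso; apply Hn; eauto.
Qed.

Theorem lemma3p3 (T : Type) (tau : topology T)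
  (Hcomp : compact tau) (Hhaus : hausdorff tau)
  (a b c d : T -> T -> Prop)
  (Ha : standing tau a) (Hb : standing tau b)
  (Hc : standing tau c) (Hd : standing tau d) :
  chain3 a b c 4 -> linked a d -> linked c d -> linked b d.
Proof.
  intros [[A1 [B1 [Hc1 [HA1 HB1]]]] [[B2 [C2 [Hc2 [HB2 HC2]]]] Hdist]] Had Hcd.
  intros [B [D [Hc3 [HB HD]]]].
  destruct Ha as [_ [_ Hda]]. destruct Hc as [_ [_ Hdc]]. destruct Hb as [_ [Hbb _]].
  destruct (@sh_nonempty T a b Hbb Hda) as [x Hx].
  destruct (@sh_nonempty T c b Hbb Hdc) as [y Hy].
  assert (xB1 : B1 x).
  { apply Hx; auto. intros u v Hu Hv.
    destruct (Hc1 u); [|contradiction]. destruct (Hc1 v); [|contradiction]. auto. }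
  assert (yB2 : B2 y).
  { apply Hy; auto. intros u v Hu Hv.
    destruct (Hc2 u); [contradiction|]. destruct (Hc2 v); [contradiction|]. auto. }
  assert (P1 : exists p, B1 p /\ B p).
  { apply NNPP; intro Hn. apply Had. exists A1, D. split; auto.
    intro z. destruct (Hc1 z); auto. destruct (Hc3 z); auto.
    exfalso; apply Hn; eauto. }
  assert (P2 : exists q, B2 q /\ B q).
  { apply NNPP; intro Hn. apply Hcd. exists C2, D. split; auto.
    intro z. destruct (Hc2 z); auto. destruct (Hc3 z); auto.
    exfalso; apply Hn; eauto. }
  destruct P1 as [p [p1 p2]]. destruct P2 as [q [q1 q2]].
  apply (Hdist x y Hx Hy).
  eapply within_mono with (k := 1 + (1 + 1)); [|lia].
  eapply within_trans; [apply HB1; eauto|].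
  eapply within_trans; [apply HB; eauto|]. apply HB2; auto.
Qed.
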